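(* Let $n\ge1$, $\delta>0$, and $\hat r\in\mathbb R^n$ with $\hat r_1\ge\hat r_2\ge\cdots\ge\hat r_n$. Let $t_0$ be the unique solution of $\sum_{i=1}^n(\hat r_i-t)_+=\delta$, and define $$t^\star:=\inf\Big\{t\ge t_0:\ \sum_{i:\hat r_i>t}(\hat r_1-\hat r_i)\le\delta\Big\}.$$ Then the vector $\pi^\star\in\mathbb R^n$ given by $$\pi_i^\star=\frac{(\hat r_i-t^\star)_+}{\delta}\ (i=2,\dots,n),\qquad \pi_1^\star=1-\frac1\delta\sum_{i=2}^n(\hat r_i-t^\star)_+$$ belongs to $\Delta_n$ and is an optimal solution of $$\min_{\pi\in\Delta_n}\ \max_{\|\Delta\|_1\le\delta}\mathrm{Reg}(\pi,\hat r+\Delta).$$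
   Context: $\Delta_n:=\{q\in\mathbb R^n_+:\sum_iq_i=1\}$; $(a)_+:=\max\{a,0\}$. For $\pi\in\Delta_n$ and $s\in\mathbb R^n$, $\mathrm{Reg}(\pi,s):=\max_{\beta\in\Delta_n}\langle\beta-\pi,s\rangle$. *)

(* Defs.v *)
From HB Require Import structures.
From mathcomp Require Import all_boot all_order all_algebra.
From mathcomp Require Import all_classical all_reals.
From mathcomp Require Import ereal.
Unset Printing Implicit Defensive.
Import Order.TTheory GRing.Theory Num.Theory.
Local Open Scope classical_set_scope.
Local Open Scope ring_scope.

Definition pospart {R : realType} (a : R) : R := Num.max a 0.

Definition simplex (R : realType) (n : nat) : set ('I_n -> R) :=
  [set q | (forall i, 0 <= q i) /\ \sum_(i < n) q i = 1].

Definition dotp {R : realType} {n : nat} (x y : 'I_n -> R) : R :=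
  \sum_(i < n) x i * y i.

Definition l1norm {R : realType} {n : nat} (x : 'I_n -> R) : R :=
  \sum_(i < n) `|x i|.

Definition Reg {R : realType} {n : nat} (pi s : 'I_n -> R) : \bar R :=
  ereal_sup [set ((dotp (fun i => beta i - pi i) s)%:E) | beta in simplex R n].

Definition worst_regret {R : realType} {n : nat} (delta : R) (rhat pi : 'I_n -> R)
  : \bar R :=
  ereal_sup [set Reg pi (fun i => rhat i + D i) | D in [set D | l1norm D <= delta]].

Definition tstar {R : realType} {n : nat} (i1 : 'I_n) (delta t0 : R)
  (rhat : 'I_n -> R) : R :=
  inf [set t | t0 <= t /\ \sum_(i < n | t < rhat i) (rhat i1 - rhat i) <= delta].

Definition pistar {R : realType} {n : nat} (i1 : 'I_n) (delta ts : R)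
  (rhat : 'I_n -> R) : 'I_n -> R :=
  fun i => if i == i1 then
             1 - delta^-1 * \sum_(j < n | j != i1) pospart (rhat j - ts)
           else pospart (rhat i - ts) / delta.

(* Main.v *)
Require Import Defs.
From HB Require Import structures.
From mathcomp Require Import all_boot all_order all_algebra.
From mathcomp Require Import all_classical all_reals.
From mathcomp Require Import ereal.
From mathcomp Require Import ring lra.
Import Order.TTheory GRing.Theory Num.Theory.
Local Open Scope classical_set_scope.
Local Open Scope ring_scope.
Lemma pp_cases {R : realType} (a : R) :
  (0 <= a /\ pospart a = a) \/ (a < 0 /\ pospart a = 0).
Proof.
rewrite /pospart; case: (lerP 0 a) => h.
- by left; split => //; rewrite max_l.
- by right; split => //; rewrite max_r // ltW.
Qed.

Lemma pp_ge0 {R : realType} (a : R) : 0 <= pospart a.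
Proof. by case: (pp_cases a) => -[? ->] //. Qed.

Lemma sum_cond_le {R : realType} {n} (P Q : pred 'I_n) (a : 'I_n -> R) :
  (forall i, 0 <= a i) -> (forall i, P i -> Q i) ->
  \sum_(i < n | P i) a i <= \sum_(i < n | Q i) a i.
Proof.
move=> a0 PQ; rewrite [X in X <= _]big_mkcond [X in _ <= X]big_mkcond /=.
apply: ler_sum => i _; case: (boolP (P i)) => Pi; first by rewrite (PQ _ Pi).
by case: (Q i).
Qed.

Lemma sum_delta {R : realType} {n} (f : 'I_n -> R) j :
  \sum_(i < n) (if i == j then f i else 0) = f j.
Proof. by rewrite -big_mkcond /= big_pred1_eq. Qed.

Lemma dot_shift {R : realType} {n} (p r : 'I_n -> R) (r1 : R) :
  \sum_(i < n) p i = 1 ->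
  dotp p r = r1 - \sum_(i < n) p i * (r1 - r i).
Proof.
move=> hs; rewrite /dotp.
have -> : \sum_(i < n) p i * (r1 - r i) = \sum_(i < n) p i * r1 - \sum_(i < n) p i * r i.
  by rewrite -sumrB; apply: eq_bigr => i _; rewrite mulrBr.
by rewrite -mulr_suml hs mul1r; lra.
Qed.
Lemma pair_le {R : realType} {n} (p : 'I_n -> R) i j :
  simplex R n p -> i != j -> p i + p j <= 1.
Proof.
move=> [p0 ps] ij; rewrite -ps (bigD1 i) //= (bigD1 j) /=; last by rewrite eq_sym.
rewrite addrA lerDl; apply: sumr_ge0 => k _; exact: p0.
Qed.

Lemma one_le {R : realType} {n} (p : 'I_n -> R) j :
  simplex R n p -> p j <= 1.
Proof.
move=> [p0 ps]; rewrite -ps (bigD1 j) //= lerDl; apply: sumr_ge0 => k _; exact: p0.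
Qed.

Lemma dev_le {R : realType} {n} (p D : 'I_n -> R) (d : R) j :
  simplex R n p -> l1norm D <= d ->
  D j - \sum_(i < n) p i * D i <= d * (1 - p j).
Proof.
move=> hp hD.
have hj1 := one_le p j hp.
have -> : D j - \sum_(i < n) p i * D i =
   \sum_(i < n) ((if i == j then 1 else 0) - p i) * D i.
  rewrite -(sum_delta D j) -sumrB; apply: eq_bigr => i _.
  by case: (i == j); rewrite mulrBl ?mul1r ?mul0r.
apply: (@le_trans _ _ (\sum_(i < n) (1 - p j) * `|D i|)).
  apply: ler_sum => i _.
  case: (eqVneq i j) => [->|ij]; rewrite ?eqxx.
    have h1 := ler_norm (D j); nra.
  rewrite ?(negbTE ij).
  have h1 := ler_norm (D i); have h2 : - D i <= `|D i| by rewrite -normrN ler_norm.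
  have hp0 : 0 <= p i by case: hp.
  have := @pair_le _ _ p i j hp ij; nra.
rewrite -mulr_sumr; move: hD; rewrite /l1norm => hD; nra.
Qed.

Lemma reg_ub {R : realType} {n} (p beta D r : 'I_n -> R) (U d : R) :
  simplex R n p -> simplex R n beta -> l1norm D <= d ->
  (forall j, r j - d * p j <= U) ->
  dotp (fun i => beta i - p i) (fun i => r i + D i) <= d + U - dotp p r.
Proof.
move=> hp hb hD hU.
set s := fun i => r i + D i.
have -> : dotp (fun i => beta i - p i) s =
    \sum_(j < n) beta j * (s j - dotp p s).
  rewrite /dotp.
  have -> : \sum_(j < n) beta j * (s j - \sum_(i < n) p i * s i) =
     \sum_(j < n) beta j * s j - (\sum_(j < n) beta j) * \sum_(i < n) p i * s i.
    by rewrite mulr_suml -sumrB; apply: eq_bigr => j _; rewrite mulrBr.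
  by case: hb => _ ->; rewrite mul1r -sumrB; apply: eq_bigr => j _; rewrite mulrBl.
have -> : d + U - dotp p r = \sum_(j < n) beta j * (d + U - dotp p r).
  by rewrite -mulr_suml; case: hb => _ ->; rewrite mul1r.
apply: ler_sum => j _.
have b0 : 0 <= beta j by case: hb.
have e : dotp p s = dotp p r + \sum_(i < n) p i * D i.
  by rewrite /dotp -big_split; apply: eq_bigr => i _; rewrite /s mulrDr.
have := @dev_le _ _ p D d j hp hD; have := hU j; rewrite e /s; nra.
Qed.
Lemma worst_ub {R : realType} {n} (d U : R) (r p : 'I_n -> R) :
  simplex R n p -> (forall j, r j - d * p j <= U) ->
  (worst_regret d r p <= (d + U - dotp p r)%:E)%E.
Proof.
move=> hp hU; apply: ge_ereal_sup => _ [D hD <-].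
apply: ge_ereal_sup => _ [beta hb <-]; rewrite lee_fin.
exact: reg_ub.
Qed.

Lemma worst_lb {R : realType} {n} (d : R) (r p : 'I_n -> R) j :
  0 <= d -> simplex R n p ->
  ((r j - d * p j + d - dotp p r)%:E <= worst_regret d r p)%E.
Proof.
move=> d0 hp.
pose D := fun i : 'I_n => if i == j then d else 0.
pose beta := fun i : 'I_n => if i == j then (1:R) else 0.
apply: le_ereal_sup_tmp; exists (Reg p (fun i => r i + D i)).
  exists D => //; change (l1norm D <= d); rewrite /l1norm.
  have -> : \sum_(i < n) `|D i| = \sum_(i < n) (if i == j then d else 0).
    by apply: eq_bigr => i _; rewrite /D; case: (i == j); rewrite ?normr0 ?ger0_norm.
  by rewrite sum_delta.
apply: le_ereal_sup_tmp; eexists.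
  exists beta => //; split.
    by move=> i; rewrite /beta; case: (i == j).
  by rewrite sum_delta.
rewrite lee_fin /dotp.
have -> : \sum_(i < n) (beta i - p i) * (r i + D i) =
   \sum_(i < n) (if i == j then r i + d else 0) - \sum_(i < n) p i * r i
   - \sum_(i < n) (if i == j then p i * d else 0).
  rewrite -!sumrB; apply: eq_bigr => i _; rewrite /beta /D.
  case: (i == j); ring.
by rewrite !sum_delta; lra.
Qed.
Definition hh {R : realType} {n} (r : 'I_n -> R) i1 (t : R) :=
  \sum_(i < n | t < r i) (r i1 - r i).
Definition KK {R : realType} {n} (r : 'I_n -> R) i1 (t : R) :=
  \sum_(i < n) pospart (r i - t) * (r i1 - r i).

Lemma K_ge {R : realType} {n} (r : 'I_n -> R) i1 (ts M : R) :
  (forall i, r i <= r i1) -> ts <= M ->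
  KK r i1 ts - KK r i1 M <= (M - ts) * hh r i1 ts.
Proof.
move=> hm tM; rewrite /KK /hh -sumrB mulr_sumr [X in _ <= X]big_mkcond /=.
apply: ler_sum => i _; have := hm i.
case: (pp_cases (r i - ts)) => -[h1 ->]; case: (pp_cases (r i - M)) => -[h2 ->];
  case: ltrP => h3; nra.
Qed.

Lemma K_le {R : realType} {n} (r : 'I_n -> R) i1 (M ts c : R) :
  (forall i, r i <= r i1) -> M <= c -> c < ts ->
  (forall i, c < r i -> ts <= r i) ->
  (ts - M) * hh r i1 c <= KK r i1 M - KK r i1 ts.
Proof.
move=> hm Mc cts hc; rewrite /KK /hh -sumrB mulr_sumr [X in X <= _]big_mkcond /=.
apply: ler_sum => i _; have := hm i.
case: ltrP => h3.
  have := hc i h3.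
  case: (pp_cases (r i - ts)) => -[h1 ->]; case: (pp_cases (r i - M)) => -[h2 ->]; nra.
case: (pp_cases (r i - ts)) => -[h1 ->]; case: (pp_cases (r i - M)) => -[h2 ->]; nra.
Qed.
Lemma tstar_props {R : realType} {n} (r : 'I_n -> R) i1 (d t0 : R) :
  (forall i, r i <= r i1) -> 0 <= d ->
  t0 <= tstar i1 d t0 r /\ hh r i1 (tstar i1 d t0 r) <= d /\
  (forall x, t0 <= x -> x < tstar i1 d t0 r -> d < hh r i1 x).
Proof.
move=> hm d0.
set S := [set t | t0 <= t /\ \sum_(i < n | t < r i) (r i1 - r i) <= d].
have ne : S !=set0.
  exists (Num.max t0 (r i1)); split; first by rewrite le_max lexx.
  rewrite big_mkcond big1 // => i _.
  have := hm i; have : r i1 <= Num.max t0 (r i1) by rewrite le_max lexx orbT.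
  by case: ltrP => // h1 h2 h3; exfalso; lra.
have lb : lbound S t0 by move=> x [].
have hl : has_lbound S by exists t0.
have tst : tstar i1 d t0 r = inf S by [].
rewrite tst.
have h0 : t0 <= inf S by apply: lb_le_inf.
split => //; split.
  pose c := \big[Order.min/inf S + 1]_(i | inf S < r i) r i.
  have hc : inf S < c.
    by apply: lt_bigmin => //; lra.
  have [s [s0 hs] sc] := inf_lt ne hc.
  have ss : inf S <= s by apply: ge_inf.
  apply: le_trans hs; apply: sum_cond_le => i.
    by have := hm i; lra.
  move=> hi; have : c <= r i by apply: bigmin_le_cond.
  lra.
move=> x hx hxs; rewrite ltNge; apply/negP => hh1.
have : inf S <= x by apply: ge_inf => //; split.
lra.
Qed.
Theorem mainTheorem5 (R : realType) (n : nat) (hn : (0 < n)%N) (delta : R)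
  (hdelta : 0 < delta) (rhat : 'I_n -> R)
  (hsorted : forall i j : 'I_n, (i <= j)%N -> rhat j <= rhat i)
  (t0 : R) (ht0 : \sum_(i < n) pospart (rhat i - t0) = delta) :
  let i1 : 'I_n := Ordinal hn in
  let ts := tstar i1 delta t0 rhat in
  let ps := pistar i1 delta ts rhat in
  simplex R n ps /\
  (forall pi : 'I_n -> R, simplex R n pi ->
     (worst_regret delta rhat ps <= worst_regret delta rhat pi)%E).
Proof.
move=> i1 ts ps.
have hm : forall i, rhat i <= rhat i1 by move=> i; apply: hsorted.
have d0 : 0 <= delta by apply: ltW.
have dn0 : delta != 0 by rewrite gt_eqF.
have [hts0 [hA hB]] := tstar_props rhat i1 delta t0 hm d0.
rewrite -/ts in hts0 hA hB.
set S' := \sum_(j < n | j != i1) pospart (rhat j - ts).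
have hS : pospart (rhat i1 - ts) + S' <= delta.
  have -> : pospart (rhat i1 - ts) + S' = \sum_(i < n) pospart (rhat i - ts).
    by rewrite [RHS](bigD1 i1).
  rewrite -ht0; apply: ler_sum => i _.
  case: (pp_cases (rhat i - ts)) => -[h1 ->]; case: (pp_cases (rhat i - t0)) => -[h2 ->]; lra.
have S0 : 0 <= S' by apply: sumr_ge0 => i _; apply: pp_ge0.
have hps : simplex R n ps.
  split.
    move=> i; rewrite /ps /pistar; case: eqP => _.
      have e : delta * (delta^-1 * S') = S' by rewrite mulrA mulfV // mul1r.
      have := pp_ge0 (rhat i1 - ts); move: e hS; set z := delta^-1 * S'.
      move=> e hS hp0.
      have : delta * (z - 1) <= 0 by lra.
      rewrite pmulr_rle0 //; lra.
    by apply: divr_ge0 => //; apply: pp_ge0.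
  rewrite (bigD1 i1) //= /ps /pistar eqxx.
  have -> : \sum_(i < n | i != i1) (if i == i1 then 1 - delta^-1 * S'
      else pospart (rhat i - ts) / delta) = S' / delta.
    by rewrite /S' mulr_suml; apply: eq_bigr => i /negbTE ->.
  by rewrite [S' / delta]mulrC subrK.
have hU : forall j, rhat j - delta * ps j <= ts.
  move=> j; rewrite /ps /pistar; case: eqP => [->|_].
    rewrite -/S' mulrBr mulr1 mulrA mulfV // mul1r.
    case: (pp_cases (rhat i1 - ts)) => -[h1 e]; rewrite e in hS; lra.
  rewrite mulrC divfK //.
  by case: (pp_cases (rhat j - ts)) => -[h1 ->]; lra.
split => // pi hpi.
pose F j := rhat j - delta * pi j.
case: (@arg_maxP _ _ _ i1 predT F isT) => jm _ hjm.
pose M := F jm.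
have hF : forall i, F i <= M by move=> i; apply: hjm.
apply: le_trans (worst_ub delta ts rhat ps hps hU) _.
apply: le_trans _ (worst_lb delta rhat pi jm d0 hpi); rewrite lee_fin.
have pi0 : forall i, 0 <= pi i by case: hpi.
rewrite (dot_shift ps rhat (rhat i1) hps.2) (dot_shift pi rhat (rhat i1) hpi.2).
have e1 : \sum_(i < n) ps i * (rhat i1 - rhat i) = KK rhat i1 ts / delta.
  rewrite /KK mulr_suml; apply: eq_bigr => i _; rewrite /ps /pistar.
  case: eqP => [->|_]; first by rewrite subrr !mulr0 mul0r.
  by rewrite mulrAC.
have e2 : KK rhat i1 M <= delta * \sum_(i < n) pi i * (rhat i1 - rhat i).
  rewrite /KK mulr_sumr; apply: ler_sum => i _.
  have := hF i; have := hm i; have := pi0 i; rewrite /F => p0 hmi hFi.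
  rewrite mulrA; apply: ler_wpM2r; first by lra.
  case: (pp_cases (rhat i - M)) => -[h1 ->]; [lra | nra].
have hM0 : t0 <= M.
  rewrite leNgt; apply/negP => hMt.
  have hr1 : t0 < rhat i1.
    rewrite ltNge; apply/negP => hr.
    move: ht0; rewrite big1 => [h0|i _]; first by lra.
    by have := hm i; case: (pp_cases (rhat i - t0)) => -[h1 ->] //; lra.
  have s1 : \sum_(i < n) pospart (rhat i - M) <= delta.
    case: hpi => _ hs1.
    apply: (@le_trans _ _ (\sum_(i < n) delta * pi i)); last by rewrite -mulr_sumr hs1 mulr1.
    apply: ler_sum => i _; have := hF i; have := pi0 i; rewrite /F.
    by case: (pp_cases (rhat i - M)) => -[h1 ->]; nra.
  have s2 : delta < \sum_(i < n) pospart (rhat i - M).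
    rewrite -ht0 (bigD1 i1) //= [X in _ < X](bigD1 i1) //=.
    have : \sum_(i < n | i != i1) pospart (rhat i - t0) <=
           \sum_(i < n | i != i1) pospart (rhat i - M).
      apply: ler_sum => i _.
      by case: (pp_cases (rhat i - t0)) => -[h1 ->]; case: (pp_cases (rhat i - M)) => -[h2 ->]; lra.
    by case: (pp_cases (rhat i1 - t0)) => -[h1 ->]; case: (pp_cases (rhat i1 - M)) => -[h2 ->]; lra.
  lra.
have key : delta * ts + KK rhat i1 ts <= delta * M + KK rhat i1 M.
  case: (lerP ts M) => h.
    have := K_ge rhat i1 ts M hm h; nra.
  pose c := \big[Order.max/M]_(i | rhat i < ts) rhat i.
  have hc1 : M <= c by apply: bigmax_ge_id.
  have hc2 : c < ts by apply: bigmax_lt.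
  have hc3 : forall i, c < rhat i -> ts <= rhat i.
    move=> i hi; case: (ltrP (rhat i) ts) => // hi2.
    have : rhat i <= c by apply: le_bigmax_cond.
    lra.
  have h1 := K_le rhat i1 M ts c hm hc1 hc2 hc3.
  have h2 := hB c (le_trans hM0 hc1) hc2.
  have h3 : (ts - M) * delta <= (ts - M) * hh rhat i1 c.
    by apply: ler_wpM2l; lra.
  lra.
have ey : delta * (KK rhat i1 ts / delta) = KK rhat i1 ts by rewrite mulrC divfK.
have eM : M = rhat jm - delta * pi jm by [].
rewrite e1; move: ey e2 key eM.
set x := \sum_(i < n) _; set y := KK rhat i1 ts / delta.
move=> ey e2 key eM.
have : delta * ts + delta * y <= delta * M + delta * x by lra.
rewrite -!mulrDr => hh1.
have : ts + y <= M + x by rewrite -(ler_pM2l hdelta).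
lra.
Qed.
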